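(* Let $n\ge2$. Every connected component $C$ of $\widetilde P_0(S_n)$ is isomorphic to the subgraph of $P_0(\mathcal T(S_n))$ induced on the set $\mathcal T(C)$ of types of vertices of $C$ if and only if $2\le n\le 5$.
   Context: $\widetilde P_0(S_n)$: vertex set $\{[x]:x\in S_n\setminus\{\mathrm{id}\}\}$ with $[x]=\{y:\langle y\rangle=\langle x\rangle\}$, distinct $[x],[y]$ adjacent iff some representatives are one a positive power of the other. The type of $[\psi]$ is the partition $T_\psi$ of $n$ given by orbit lengths of $\langle\psi\rangle$. For a partition $T=[m_1^{t_1},\dots,m_k^{t_k}]$, $T^a=[(m_i/\gcd(a,m_i))^{t_i\gcd(a,m_i)}]_i$. $P_0(\mathcal T(S_n))$: vertices the partitions of $n$ other than $[1^n]$, distinct $T,T'$ adjacent iff one is a power of the other. *)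

(* Defs.v *)
From Stdlib Require Import Relations.
From mathcomp Require Import all_boot all_fingroup.
Set Implicit Arguments. Unset Strict Implicit. Unset Printing Implicit Defensive.
Local Open Scope group_scope.

Definition is_component (T : Type) (V : T -> Prop) (E : T -> T -> Prop)
  (C : T -> Prop) : Prop :=
  exists v, V v /\
    forall w, C w <-> clos_refl_trans T (fun a b => V a /\ V b /\ E a b) v w.

Definition induced_iso (T U : Type) (C : T -> Prop) (E : T -> T -> Prop)
  (D : U -> Prop) (F : U -> U -> Prop) : Prop :=
  exists f : T -> U,
    (forall a, C a -> D (f a)) /\
    (forall a b, C a -> C b -> f a = f b -> a = b) /\
    (forall u, D u -> exists2 a, C a & f a = u) /\
    (forall a b, C a -> C b -> (E a b <-> F (f a) (f b))).

Definition pclass (n : nat) (x : 'S_n) : {set 'S_n} :=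
  [set y | <[y]> == <[x]>].

Definition tvert (n : nat) (A : {set 'S_n}) : Prop :=
  exists2 x : 'S_n, x != 1 & A = pclass x.

Definition tadj (n : nat) (A B : {set 'S_n}) : Prop :=
  A <> B /\
  exists x y : 'S_n, x \in A /\ y \in B /\
    ((exists k, 0 < k /\ x = y ^+ k)%N \/ (exists k, 0 < k /\ y = x ^+ k)%N).

(* partitions represented as nonincreasing lists of positive parts *)
Definition ptype (n : nat) (psi : 'S_n) : seq nat :=
  sort geq (map (fun X : {set 'I_n} => #|X|) (enum (porbits psi))).

Definition tpow (a : nat) (T : seq nat) : seq nat :=
  sort geq (flatten [seq nseq (gcdn a m) (m %/ gcdn a m) | m <- T]).

Definition padj (T T' : seq nat) : Prop :=
  T <> T' /\
  ((exists a, 0 < a /\ T' = tpow a T)%N \/ (exists a, 0 < a /\ T = tpow a T')%N).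

Definition typesOf (n : nat) (C : {set 'S_n} -> Prop) (t : seq nat) : Prop :=
  exists x : 'S_n, C (pclass x) /\ ptype x = t.

(* Main.v *)
Require Import Defs.
From Stdlib Require Import Relations Setoid ClassicalEpsilon.
From mathcomp Require Import all_boot all_fingroup.
Set Implicit Arguments. Unset Strict Implicit. Unset Printing Implicit Defensive.

Section A.
Variable n : nat.
Implicit Types x y a b g : 'S_n.

Lemma pclassP x y : (y \in pclass x) = (<[y]> == <[x]>)%g.
Proof. by rewrite inE. Qed.

Lemma pclass_self x : x \in pclass x.
Proof. by rewrite pclassP. Qed.

Lemma pclass_eq x y : pclass x = pclass y <-> <[x]>%g = <[y]>%g.
Proof.
split=> [E|E].
  by have := pclass_self x; rewrite E pclassP => /eqP.
by apply/setP=> z; rewrite !pclassP E.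
Qed.

Lemma cyc_eqE x y : (<[x]> == <[y]>)%g = (x \in <[y]>%g) && (y \in <[x]>%g).
Proof. by rewrite eqEsubset !cycle_subG. Qed.

Lemma ptype_cyc x y : <[x]>%g = <[y]>%g -> ptype x = ptype y.
Proof.
move=> E; rewrite /ptype /porbits.
have -> : porbit x = porbit y by rewrite porbit.unlock E.
by [].
Qed.

Lemma ptype_repr x : ptype (repr (pclass x)) = ptype x.
Proof.
apply: ptype_cyc; apply/eqP; rewrite -pclassP.
by apply: mem_repr (pclass_self x).
Qed.

Lemma pclass_repr x : pclass (repr (pclass x)) = pclass x.
Proof.
apply/pclass_eq/eqP; rewrite -pclassP.
by apply: mem_repr (pclass_self x).
Qed.

Lemma pos_pow a b : a \in <[b]>%g -> exists k, (0 < k)%N /\ a = (b ^+ k)%g.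
Proof.
case/cycleP=> k ->; exists (k + #[b]%g)%N; split.
  by rewrite addn_gt0 order_gt0 orbT.
by rewrite expgD expg_order mulg1.
Qed.

Lemma tadjP a b : tadj (pclass a) (pclass b) <->
  (<[a]> != <[b]>)%g /\ (a \in <[b]>%g \/ b \in <[a]>%g).
Proof.
split.
  case=> ne [x [y [xa [yb H]]]].
  split; first by apply/eqP => E; apply: ne; apply/pclass_eq.
  move: xa yb; rewrite !pclassP => /eqP xa /eqP yb.
  case: H => [[k [_ E]]|[k [_ E]]].
    left; rewrite -yb -cycle_subG -xa cycle_subG E; exact: mem_cycle.
  right; rewrite -xa -cycle_subG -yb cycle_subG E; exact: mem_cycle.
case=> ne H; split.
  by move/pclass_eq=> E; rewrite E eqxx in ne.
exists a, b; split; first exact: pclass_self.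
split; first exact: pclass_self.
case: H => H.
  by left; have [k [k0 E]] := pos_pow H; exists k.
by right; have [k [k0 E]] := pos_pow H; exists k.
Qed.

Lemma perm_enum_imset (T U : finType) (f : T -> U) (A : {set T}) :
  {in A &, injective f} -> perm_eq (enum (f @: A)) (map f (enum A)).
Proof.
move=> inj; apply: uniq_perm; first exact: enum_uniq.
  rewrite map_inj_in_uniq ?enum_uniq //.
  by move=> u v; rewrite !mem_enum; apply: inj.
move=> u; rewrite mem_enum; apply/imsetP/mapP => -[v vA ->]; exists v => //.
  by rewrite mem_enum.
by rewrite -mem_enum.
Qed.

Lemma porbit_conj x g i : porbit (x ^ g)%g (g i) = g @: porbit x i.
Proof.
apply/setP=> j; apply/porbitP/imsetP.
  case=> k ->; exists ((x ^+ k)%g i); first exact: mem_porbit.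
  by rewrite -conjXg permJ.
case=> j0 /porbitP [k ->] ->; exists k.
by rewrite -conjXg permJ.
Qed.

Lemma porbits_conj x g : porbits (x ^ g)%g = (fun O : {set 'I_n} => g @: O) @: porbits x.
Proof.
apply/setP=> O; apply/imsetP/imsetP.
  case=> j _ ->; exists (porbit x (g^-1%g j)); first by apply: imset_f.
  by rewrite -porbit_conj permKV.
case=> O0 /imsetP [i _ ->] ->; exists (g i) => //.
by rewrite porbit_conj.
Qed.

Lemma geq_sortE (s1 s2 : seq nat) : perm_eq s1 s2 -> sort geq s1 = sort geq s2.
Proof.
move=> P; apply/perm_sortP => //.
- by move=> u v; apply: leq_total.
- by move=> u v w h1 h2; apply: leq_trans h2 h1.
- by move=> u v /andP [h1 h2]; apply/anti_leq/andP.
Qed.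

Lemma ptype_conj x g : ptype (x ^ g)%g = ptype x.
Proof.
rewrite /ptype porbits_conj; apply: geq_sortE.
have inj : {in porbits x &, injective (fun O : {set 'I_n} => g @: O)}.
  by move=> u v _ _; apply: imset_inj; apply: perm_inj.
apply: (perm_trans (perm_map _ (perm_enum_imset inj))).
rewrite -map_comp.
have E : forall O : {set 'I_n}, ((fun X : {set 'I_n} => #|X|) \o (fun x1 : {set 'I_n} => g @: x1)) O = #|O|.
  by move=> O /=; apply: card_imset; apply: perm_inj.
by rewrite (eq_map E) perm_refl.
Qed.
End A.

Definition app (p : seq nat) i := nth 0 p i.
Definition cmul n (p q : seq nat) := [seq app q (app p i) | i <- iota 0 n].
Definition cycs n N p := undup (traject (cmul n p) (iota 0 n) N).
Definition corb n p i := traject (app p) i n.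
Definition cminb n p i := all (fun j => i <= j) (corb n p i).
Definition csz n p i := size (undup (corb n p i)).
Definition ctype n p := sort geq [seq csz n p i | i <- iota 0 n & cminb n p i].

Section B.
Variable n : nat.
Implicit Types x y a b g : 'S_n.

Definition lp x : seq nat := [seq val (x i) | i <- enum 'I_n].

Lemma app_lp x i : app (lp x) (val i) = val (x i).
Proof.
rewrite /app /lp (nth_map i) ?nth_ord_enum // size_enum_ord; exact: ltn_ord.
Qed.

Lemma lp_inj x y : lp x = lp y -> x = y.
Proof.
move=> E; apply/permP=> i; apply: val_inj; by rewrite -!app_lp E.
Qed.

Lemma lp_map (f : 'I_n -> nat) (h : nat -> nat) :
  (forall i, h (val i) = f i) -> [seq f i | i <- enum 'I_n] = map h (iota 0 n).
Proof. move=> H; rewrite -val_enum_ord -map_comp; apply: eq_map => i; exact: esym (H i). Qed.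

Lemma lp1 : lp 1%g = iota 0 n.
Proof.
by rewrite /lp (lp_map (h := id)) ?map_id // => i; rewrite perm1.
Qed.

Lemma lpM x y : lp (x * y)%g = cmul n (lp x) (lp y).
Proof. by rewrite /lp /cmul (lp_map (h := fun i => app (lp y) (app (lp x) i))) // => i; rewrite permM !app_lp. Qed.

Lemma lpX x k : lp (x ^+ k)%g = iter k (cmul n (lp x)) (iota 0 n).
Proof. by elim: k => [|k IH]; rewrite ?expg0 ?lp1 // expgS lpM IH. Qed.

Lemma lp_eq1 x : (x == 1%g) = (lp x == iota 0 n).
Proof.
apply/eqP/eqP => [->|E]; first exact: lp1.
by apply: lp_inj; rewrite E lp1.
Qed.

Lemma order_le x : (#[x]%g <= n`!)%N.
Proof. by rewrite -card_Sn; apply: max_card. Qed.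

Lemma cyc_mem a b : (a \in <[b]>%g) = (lp a \in cycs n (n`!) (lp b)).
Proof.
rewrite /cycs mem_undup; apply/idP/trajectP.
  case/cyclePmin=> k lt ->; exists k; first exact: leq_trans lt (order_le b).
  by rewrite lpX.
case=> k _ E; rewrite -lpX in E; rewrite (lp_inj E); exact: mem_cycle.
Qed.

Lemma lp_perm x : lp x \in permutations (iota 0 n).
Proof.
have -> : lp x = map val (map x (enum 'I_n)) by rewrite -map_comp.
rewrite mem_permutations -val_enum_ord; apply: perm_map.
apply: uniq_perm; rewrite ?enum_uniq //.
  by rewrite map_inj_uniq ?enum_uniq //; apply: perm_inj.
move=> i; rewrite mem_enum; apply/mapP; exists (x^-1%g i); rewrite ?mem_enum ?permKV //.
Qed.

Lemma map_val_traject x i m :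
  map val (traject x i m) = traject (app (lp x)) (val i) m.
Proof. by elim: m i => [|m IH] i //=; rewrite IH app_lp. Qed.

Lemma porbit_trajn x i : porbit x i =i traject x i n.
Proof.
move=> j; apply/idP/idP.
  rewrite porbit_traject => /trajectP [k lt ->]; apply/trajectP; exists k => //.
  apply: leq_trans lt _; apply: leq_trans (max_card _) _; by rewrite card_ord.
case/trajectP=> k _ ->; rewrite -permX; exact: mem_porbit.
Qed.

Lemma card_porbit x i : #|porbit x i| = csz n (lp x) (val i).
Proof.
rewrite /csz /corb -map_val_traject undup_map_inj; last exact: val_inj.
rewrite size_map -(card_uniqP (undup_uniq _)).
by apply: eq_card => j; rewrite mem_undup porbit_trajn.
Qed.

Definition minp x i := all (fun j : 'I_n => (val i <= val j)%N) (traject x i n).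

Lemma minpE x i : cminb n (lp x) (val i) = minp x i.
Proof. by rewrite /cminb /corb -map_val_traject all_map. Qed.

Lemma minpP x i : reflect (forall j, j \in porbit x i -> (val i <= val j)%N) (minp x i).
Proof.
apply: (iffP allP) => H j; rewrite ?porbit_trajn; [exact: H | by move=> J; apply: H; rewrite porbit_trajn].
Qed.

Lemma porbits_min x : porbits x = porbit x @: [set i | minp x i].
Proof.
apply/setP=> O; apply/imsetP/imsetP; last first.
  by case=> i _ ->; exists i.
case=> j _ ->.
pose P m := [exists k : 'I_n, (val k == m) && (k \in porbit x j)].
have Pj : exists m, P m by exists (val j); apply/existsP; exists j; rewrite eqxx porbit_id.
case: (ex_minnP Pj) => m /existsP [i /andP [/eqP im ij]] minm.
have E : porbit x i = porbit x j by apply/eqP; rewrite eq_porbit_mem.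
exists i.
  rewrite inE; apply/minpP => k; rewrite E => kj.
  by rewrite im; apply: minm; apply/existsP; exists k; rewrite eqxx kj.
by rewrite E.
Qed.

Lemma porbit_min_inj x : {in [set i | minp x i] &, injective (porbit x)}.
Proof.
move=> i1 i2; rewrite !inE => /minpP m1 /minpP m2 E.
apply: val_inj; apply/eqP; rewrite eqn_leq.
have h1 : i2 \in porbit x i1 by rewrite E porbit_id.
have h2 : i1 \in porbit x i2 by rewrite -E porbit_id.
by rewrite m1 // m2.
Qed.

Lemma perm_enum_imset_seq (T U : finType) (f : T -> U) (A : {set T}) (S : seq T) :
  uniq S -> S =i A -> {in A &, injective f} -> perm_eq (enum (f @: A)) (map f S).
Proof.
move=> uS SA inj; apply: uniq_perm; first exact: enum_uniq.
  rewrite map_inj_in_uniq //.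
  by move=> u v; rewrite !SA; apply: inj.
move=> u; rewrite mem_enum; apply/imsetP/mapP => -[v vA ->]; exists v => //.
  by rewrite SA.
by rewrite -SA.
Qed.

Lemma ptypeE x : ptype x = ctype n (lp x).
Proof.
rewrite /ptype /ctype porbits_min.
have SR : [seq i <- enum 'I_n | minp x i] =i [set i | minp x i].
  by move=> i; rewrite mem_filter mem_enum andbT inE.
have P := perm_enum_imset_seq (filter_uniq _ (enum_uniq _)) SR (@porbit_min_inj x).
rewrite (geq_sortE (perm_map _ P)); congr (sort _ _).
rewrite -map_comp -val_enum_ord filter_map -map_comp.
have -> : [seq i <- enum 'I_n | preim val (cminb n (lp x)) i] = [seq i <- enum 'I_n | minp x i].
  by apply: eq_filter => i /=; rewrite minpE.
by apply: eq_map => i /=; rewrite card_porbit.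
Qed.
End B.

Definition cpadjb2 N (T T' : seq nat) :=
  if T == T' then false else
  has (fun a => T' == tpow a T) [seq d <- iota 1 N | d %| N] ||
  has (fun a => T == tpow a T') [seq d <- iota 1 N | d %| N].
Definition keyf (tb : seq (seq nat * seq (seq nat))) (p : seq nat) :=
  let cs := [seq e <- tb | p \in e.2] in
  let m := foldr maxn 0 [seq size e.2 | e <- cs] in
  head [::] [seq e.1 | e <- cs & size e.2 == m].
Definition ceqb (c1 c2 : seq (seq nat)) (p q : seq nat) := (p \in c2) && (q \in c1).
Definition cadjb (c1 c2 : seq (seq nat)) (p q : seq nat) :=
  ~~ ceqb c1 c2 p q && ((p \in c2) || (q \in c1)).
Definition AP n := permutations (iota 0 n).
Definition tb0 n := [seq (p, cycs n (n`!) p) | p <- AP n].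
Definition recd n p : (seq nat * seq (seq nat)) * seq nat * seq nat :=
  ((p, cycs n (n`!) p), ctype n p, keyf (tb0 n) p).
Definition Pr n (e1 e2 : (seq nat * seq (seq nat)) * seq nat * seq nat) :=
  if e1.1.1.1 == iota 0 n then true else
  if e2.1.1.1 == iota 0 n then true else
  if e1.2 == e2.2 then
     (if e1.1.2 == e2.1.2 then ceqb e1.1.1.2 e2.1.1.2 e1.1.1.1 e2.1.1.1 else true) &&
     (cadjb e1.1.1.2 e2.1.1.2 e1.1.1.1 e2.1.1.1 == cpadjb2 (n`!) e1.1.2 e2.1.2)
  else ~~ cadjb e1.1.1.2 e2.1.1.2 e1.1.1.1 e2.1.1.1.
Definition check n :=
  let t0 := tb0 n in
  let tb := [seq (e, ctype n e.1, keyf t0 e.1) | e <- t0] in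
  (0 < n`!) && all (fun e => all (fun m => m %| n`!) e.1.2) tb &&
  all (fun e1 => all (Pr n e1) tb) tb.

Lemma checkE n : check n = (0 < n`!) &&
  all (fun e => all (fun m => m %| n`!) e.1.2) (map (recd n) (AP n)) &&
  all (fun e1 => all (Pr n e1) (map (recd n) (AP n))) (map (recd n) (AP n)).
Proof. by rewrite /check; cbv zeta; rewrite /tb0 -map_comp. Qed.

Lemma check2 : check 2. Proof. by vm_compute. Qed.
Lemma check3 : check 3. Proof. by vm_compute. Qed.
Lemma check4 : check 4. Proof. by vm_compute. Qed.
Lemma check5 : check 5. Proof. by vm_compute. Qed.

Lemma tpow_ex N T T' : 0 < N -> all (fun m => m %| N) T ->
  (exists a, 0 < a /\ T' = tpow a T) <-> has (fun a => T' == tpow a T) [seq d <- iota 1 N | d %| N].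
Proof.
move=> N0 /allP HT; split.
  case=> a [a0 ->]; apply/hasP; exists (gcdn a N).
    rewrite mem_filter dvdn_gcdr mem_iota /= gcdn_gt0 a0 /= add1n ltnS.
    by apply: dvdn_leq => //; apply: dvdn_gcdr.
  apply/eqP; rewrite /tpow; congr (sort _ (flatten _)); apply/eq_in_map => m mT.
  by rewrite -gcdnA (gcdn_idPr (HT m mT)).
case/hasP=> d; rewrite mem_filter mem_iota => /andP [_ /andP [d1 _]] /eqP E.
by exists d.
Qed.

Lemma padjE N T T' : 0 < N -> all (fun m => m %| N) T -> all (fun m => m %| N) T' ->
  padj T T' <-> cpadjb2 N T T'.
Proof.
move=> N0 H1 H2; rewrite /padj /cpadjb2.
case: eqP => [->|ne]; first by split => // -[].
split.
  by case=> _ [/(tpow_ex _ N0 H1) h | /(tpow_ex _ N0 H2) h]; rewrite h ?orbT.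
case/orP=> [/(tpow_ex _ N0 H1) h | /(tpow_ex _ N0 H2) h]; split => //; [left|right] => //.
Qed.

Section Good.
Variable n : nat.
Hypothesis ch : check n.
Local Notation N := (n`!).
Definition K (x : 'S_n) := keyf (tb0 n) (lp x).

Lemma chk : [/\ 0 < N, forall x : 'S_n, all (fun m => m %| N) (ptype x) &
   forall a b : 'S_n, Pr n (recd n (lp a)) (recd n (lp b))].
Proof.
move: ch; rewrite checkE => /andP [/andP [N0 /allP H1] /allP H2]; split => //.
  by move=> x; rewrite ptypeE; exact: (H1 (recd n (lp x)) (map_f _ (lp_perm x))).
move=> a b; exact: (allP (H2 _ (map_f _ (lp_perm a))) _ (map_f _ (lp_perm b))).
Qed.

Lemma ceqE (a b : 'S_n) : (<[a]> == <[b]>)%g = ceqb (cycs n N (lp a)) (cycs n N (lp b)) (lp a) (lp b).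
Proof. by rewrite cyc_eqE /ceqb !cyc_mem. Qed.

Lemma tadjE (a b : 'S_n) : tadj (pclass a) (pclass b) <-> cadjb (cycs n N (lp a)) (cycs n N (lp b)) (lp a) (lp b).
Proof.
rewrite tadjP /cadjb -ceqE -!cyc_mem; split.
  by case=> -> [h|h]; rewrite h ?orbT.
by case/andP=> -> /orP H.
Qed.

Lemma PrE (a b : 'S_n) : a != 1%g -> b != 1%g ->
  if K a == K b then
    (ptype a = ptype b -> <[a]>%g = <[b]>%g) /\
    (tadj (pclass a) (pclass b) <-> padj (ptype a) (ptype b))
  else ~ tadj (pclass a) (pclass b).
Proof.
move=> ha hb; case: chk => N0 D P; move: (P a b).
rewrite /Pr /recd /= -!lp_eq1 (negbTE ha) (negbTE hb) -!ptypeE /K.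
case: eqP => E.
  case/andP=> H1 /eqP H2; split.
    by move=> pe; move: H1; rewrite pe eqxx -ceqE => /eqP.
  by rewrite tadjE H2 (padjE N0 (D a) (D b)).
by move=> H T; rewrite tadjE in T; rewrite T in H.
Qed.

Lemma good : forall C : {set 'S_n} -> Prop,
  is_component (@tvert n) (@tadj n) C -> induced_iso C (@tadj n) (typesOf C) padj.
Proof.
move=> C [v [[x0 x01 ->] Cv]].
have Q : forall w, C w -> exists a : 'S_n, [/\ a != 1%g, w = pclass a & K a = K x0].
  move=> w /Cv H.
  suff : forall u w, clos_refl_trans _ (fun a b => tvert a /\ tvert b /\ tadj a b) u w ->
     forall a : 'S_n, a != 1%g -> u = pclass a -> exists b : 'S_n, [/\ b != 1%g, w = pclass b & K b = K a].
    by move=> S; apply: S H x0 x01 erefl.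
  move=> u w0; elim=> {u w0 H w}.
  - move=> u w [_ [[b b1 ->] T]] a a1 E; subst u; exists b; split => //.
    have := PrE a1 b1; case: eqP => [//|_]; by move/(_ T).
  - by move=> u a a1 ->; exists a.
  - move=> u1 u2 u3 _ IH1 _ IH2 a a1 E.
    case: (IH1 a a1 E) => b [b1 E2 K2]; case: (IH2 b b1 E2) => c [c1 E3 K3].
    by exists c; split => //; rewrite K3.
exists (fun A => ptype (repr A)); split; [|split; [|split]].
- move=> A /[dup] CA /Q [a [_ E _]]; exists (repr A); split => //.
  by rewrite E pclass_repr -E.
- move=> A B /Q [a [a1 -> Ka]] /Q [b [b1 -> Kb]]; rewrite !ptype_repr => pe.
  have := PrE a1 b1; rewrite Ka Kb eqxx => -[H _].
  by apply/pclass_eq; apply: H.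
- move=> u [x [Cx <-]]; exists (pclass x) => //; exact: ptype_repr.
- move=> A B /Q [a [a1 -> Ka]] /Q [b [b1 -> Kb]]; rewrite !ptype_repr.
  by have := PrE a1 b1; rewrite Ka Kb eqxx => -[_ H].
Qed.
End Good.

Definition pb (P : Prop) : bool := if excluded_middle_informative P then true else false.
Lemma pbP (P : Prop) : pb P <-> P.
Proof. by rewrite /pb; case: excluded_middle_informative. Qed.

Lemma no_iso n (C : {set 'S_n} -> Prop) (A1 A2 : {set 'S_n}) :
  C A1 -> C A2 -> A1 <> A2 -> ptype (repr A1) = ptype (repr A2) ->
  ~ induced_iso C (@tadj n) (typesOf C) padj.
Proof.
move=> C1 C2 ne he [f [fD [finj _]]].
pose s := enum [set A | pb (C A)].
have sP A : (A \in s) = pb (C A) by rewrite mem_enum inE.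
have us : uniq (map f s).
  rewrite map_inj_in_uniq ?enum_uniq // => a b; rewrite !sP => /pbP ha /pbP hb.
  exact: finj.
have A1s : A1 \in s by rewrite sP; apply/pbP.
have A2s : A2 \in s by rewrite sP; apply/pbP.
have sub : {subset map f s <= map (fun A => ptype (repr A)) (rem A2 s)}.
  move=> u /mapP [A]; rewrite sP => /pbP CA ->.
  have [x [Cx <-]] := fD A CA.
  have Hx : pclass x \in s by rewrite sP; apply/pbP.
  rewrite -(ptype_repr x); case: (eqVneq (pclass x) A2) => [E | ne2].
    rewrite E -he; apply: map_f; rewrite mem_rem_uniq ?enum_uniq // inE A1s andbT.
    by apply/eqP.
  by apply: map_f; rewrite mem_rem_uniq ?enum_uniq // inE ne2 Hx.
have := uniq_leq_size us sub; rewrite !size_map size_rem //.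
have : 0 < size s by case: (s) A2s.
by case: (size s) => // k _; rewrite ltnn.
Qed.

Definition fx (i : nat) : nat :=
  if i == 0 then 1 else if i == 1 then 0 else if i == 2 then 3 else
  if i == 3 then 4 else if i == 4 then 2 else i.
Definition fxi (i : nat) : nat :=
  if i == 1 then 0 else if i == 0 then 1 else if i == 3 then 2 else
  if i == 4 then 3 else if i == 2 then 4 else i.
Definition fg (i : nat) : nat := if i == 4 then 5 else if i == 5 then 4 else i.

Lemma fxK : cancel fx fxi. Proof. by case=> [|[|[|[|[|i]]]]]. Qed.
Lemma fgK : cancel fg fg. Proof. by case=> [|[|[|[|[|[|i]]]]]]. Qed.

Section Big.
Variable m : nat.
Local Notation n := (m.+3.+3).

Lemma mkperm (f finv : nat -> nat) : (forall i, i < n -> f i < n) -> cancel f finv ->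
  {s : 'S_n | forall i, val (s i) = f (val i)}.
Proof.
move=> B K.
have inj : injective (fun i : 'I_n => inord (f i) : 'I_n).
  move=> i j /(congr1 val) /=; rewrite !inordK ?B // => /(congr1 finv); rewrite !K.
  exact: val_inj.
by exists (perm inj) => i; rewrite permE /= inordK ?B.
Qed.

Lemma fxB i : i < n -> fx i < n. Proof. by case: i => [|[|[|[|[|i]]]]]. Qed.
Lemma fgB i : i < n -> fg i < n. Proof. by case: i => [|[|[|[|[|[|i]]]]]]. Qed.

Definition o k : 'I_n := inord k.
Lemma oE k : k < n -> val (o k) = k. Proof. exact: inordK. Qed.

Lemma bad : exists C : {set 'S_n} -> Prop,
  is_component (@tvert n) (@tadj n) C /\ ~ induced_iso C (@tadj n) (typesOf C) padj.
Proof.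
have [x Hx] := mkperm fxB fxK.
have [g Hg] := mkperm fgB fgK.
have HX k i : val ((x ^+ k)%g i) = iter k fx (val i).
  by rewrite permX; elim: k => //= k <-; rewrite Hx.
pose y := (x ^+ 3)%g.
have gg i : g (g i) = i by apply: val_inj; rewrite !Hg fgK.
have yg : (y ^ g)%g = y.
  apply/permP => i; rewrite -{1}(gg i) permJ; apply: val_inj.
  rewrite Hg !HX Hg; case: (val i) => [|[|[|[|[|[|j]]]]]] //.
have y2 : y (o 2) = o 2 by apply: val_inj; rewrite HX oE.
have x2 : val (x (o 2)) = 3 by rewrite Hx oE.
pose x' := (x ^ g)%g.
have g2 : g (o 2) = o 2 by apply: val_inj; rewrite Hg oE.
have g4 : g (o 4) = o 5 by apply: val_inj; rewrite Hg !oE.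
have x'2 : val (x' (o 2)) = 3 by rewrite -{1}g2 permJ Hg x2.
have x'5 : val (x' (o 5)) = 2 by rewrite -{1}g4 permJ Hg Hx oE.
have nfix (z w : 'S_n) i : z i = i -> w i != i -> w \notin <[z]>%g.
  move=> zi wi; apply/negP => /cycleP [k E]; move: wi; rewrite E permX_fix //.
  by rewrite eqxx.
have xy : x \notin <[y]>%g.
  by apply: (nfix _ _ _ y2); apply/eqP => /(congr1 val); rewrite x2 oE.
have x'y : x' \notin <[y]>%g.
  by apply: (nfix _ _ _ y2); apply/eqP => /(congr1 val); rewrite x'2 oE.
have x5 : x (o 5) = o 5 by apply: val_inj; rewrite Hx oE.
have x'x : x' \notin <[x]>%g.
  by apply: (nfix _ _ _ x5); apply/eqP => /(congr1 val); rewrite x'5 oE.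
have y1 : y != 1%g.
  apply/eqP => /(congr1 (fun s : 'S_n => val (s (o 0)))) /=; by rewrite perm1 /y HX !oE.
have x1 : x != 1%g by apply: contraNneq xy => ->; exact: group1.
have x'1 : x' != 1%g by apply: contraNneq x'y => ->; exact: group1.
have yx : y \in <[x]>%g by exact: mem_cycle.
have yx' : y \in <[x']>%g by rewrite -yg /y conjXg mem_cycle.
pose E' := fun a b : {set 'S_n} => tvert a /\ tvert b /\ tadj a b.
pose C := fun w => clos_refl_trans _ E' (pclass y) w.
have Vy : tvert (pclass y) by exists y.
have adj z : z != 1%g -> y \in <[z]>%g -> z \notin <[y]>%g -> C (pclass z).
  move=> z1 yz zy; apply: rt_step; split => //; split; first by exists z.
  apply/tadjP; split; last by left.
  by apply: contraNneq zy => ->; exact: cycle_id.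
exists C; split.
  by exists (pclass y); split.
apply: (no_iso (adj _ x1 yx xy) (adj _ x'1 yx' x'y)).
  move/pclass_eq => E; move: x'x; by rewrite E cycle_id.
by rewrite !ptype_repr ptype_conj.
Qed.
End Big.

Theorem corollary7p9 (n : nat) (hn : (2 <= n)%N) :
  (forall C : {set 'S_n} -> Prop,
     is_component (@tvert n) (@tadj n) C ->
     induced_iso C (@tadj n) (typesOf C) padj)
  <-> (n <= 5)%N.
Proof.
split.
  case: n hn => [|[|[|[|[|[|m]]]]]] // _ H.
  by case: (bad m) => C [cC nC]; case: (nC (H C cC)).
case: n hn => [|[|[|[|[|[|m]]]]]] // _ _.
- exact: good check2.
- exact: good check3.
- exact: good check4.
- exact: good check5.
Qed.
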